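(* Suppose a total preorder $\succeq$ on $\mathcal{Q}_b$ is continuous (with respect to uniform convergence), monotonic, and satisfies the dual independence axiom. Then there exists a continuous linear functional on the Banach space $B((0,1],\Sigma)$ whose restriction to $\mathcal{Q}_b$ is a numerical representation of $\succeq$.
   Context: $\mathcal{Q}_b$ is the set of bounded, nondecreasing, left-continuous functions on $(0,1]$. $\Sigma$ is the algebra of subsets of $(0,1]$ generated by finite unions and intersections of intervals $(a,b]$ with $0<a<b\le1$. A simple function is $\sum_{i=1}^n\alpha_i\mathbf{1}_{A_i}$ with $\alpha_i\in\mathbb{R}$ and disjoint $A_i\in\Sigma$. $B((0,1],\Sigma)$ is the space of bounded functions on $(0,1]$ that are uniform limits of simple functions, with norm $\|\Phi\|=\sup_{0<p\le1}|\Phi(p)|$; it contains $\mathcal{Q}_b$. A total preorder is reflexive, transitive, complete; $\sim,\succ$ are its indifference and strict parts; continuous means the sets $\{\Psi:\Psi\succeq\Phi\}$ and $\{\Psi:\Phi\succeq\Psi\}$ are closed for each $\Phi$. Monotonic: $\Phi(p)\ge\Psi(p)$ for all $p$ implies $\Phi\succeq\Psi$. Dual independence axiom: $\Phi\succ\Psi$ implies $\alpha\Phi+(1-\alpha)\Upsilon\succ\alpha\Psi+(1-\alpha)\Upsilon$ for all $\Upsilon\in\mathcal{Q}_b$, $\alpha\in(0,1)$. $U$ is a numerical representation if $\Phi\succ\Psi\iff U(\Phi)>U(\Psi)$. *)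

(* Defs.v *)
From Stdlib Require Import Reals List.
Open Scope R_scope.

(* Functions on (0,1] are represented as R -> R; only values on (0,1] matter. *)
Definition unit_int (p : R) : Prop := 0 < p <= 1.

Definition bounded_on (f : R -> R) : Prop :=
  exists M, forall p, unit_int p -> Rabs (f p) <= M.

Definition nondecreasing_on (f : R -> R) : Prop :=
  forall p q, unit_int p -> unit_int q -> p <= q -> f p <= f q.

Definition left_continuous_on (f : R -> R) : Prop :=
  forall p, unit_int p -> forall eps, 0 < eps ->
    exists delta, 0 < delta /\
      forall q, 0 < q -> q <= p -> p - q < delta -> Rabs (f q - f p) < eps.

Definition in_Qb (f : R -> R) : Prop :=
  bounded_on f /\ nondecreasing_on f /\ left_continuous_on f.

Inductive in_Sigma : (R -> Prop) -> Prop :=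
| Sigma_int : forall a b, 0 < a -> a < b -> b <= 1 ->
    in_Sigma (fun p => a < p <= b)
| Sigma_union : forall A B, in_Sigma A -> in_Sigma B ->
    in_Sigma (fun p => A p \/ B p)
| Sigma_inter : forall A B, in_Sigma A -> in_Sigma B ->
    in_Sigma (fun p => A p /\ B p)
| Sigma_compl : forall A, in_Sigma A ->
    in_Sigma (fun p => unit_int p /\ ~ A p).

Definition dflt_piece : R * (R -> Prop) := (0, fun _ => False).

Definition simple_fn (s : R -> R) : Prop :=
  exists l : list (R * (R -> Prop)),
    Forall (fun c => in_Sigma (snd c)) l /\
    (forall i j, (i < length l)%nat -> (j < length l)%nat -> i <> j ->
       forall p, ~ (snd (nth i l dflt_piece) p /\ snd (nth j l dflt_piece) p)) /\
    (forall p, unit_int p ->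
       ((forall c, In c l -> ~ snd c p) -> s p = 0) /\
       (forall c, In c l -> snd c p -> s p = fst c)).

Definition in_B (f : R -> R) : Prop :=
  bounded_on f /\
  forall eps, 0 < eps -> exists s, simple_fn s /\
    forall p, unit_int p -> Rabs (f p - s p) <= eps.

(* Continuous (= bounded) linear functional on B, with the sup norm. *)
Definition cont_linear_functional (L : (R -> R) -> R) : Prop :=
  (forall f g a b, in_B f -> in_B g ->
     L (fun p => a * f p + b * g p) = a * L f + b * L g) /\
  (exists C, forall f M, in_B f -> (forall p, unit_int p -> Rabs (f p) <= M) ->
     Rabs (L f) <= C * M).

Definition strict (pref : (R -> R) -> (R -> R) -> Prop) f g : Prop :=
  pref f g /\ ~ pref g f.

Definition total_preorder_Qb (pref : (R -> R) -> (R -> R) -> Prop) : Prop :=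
  (forall f, in_Qb f -> pref f f) /\
  (forall f g h, in_Qb f -> in_Qb g -> in_Qb h -> pref f g -> pref g h -> pref f h) /\
  (forall f g, in_Qb f -> in_Qb g -> pref f g \/ pref g f).

Definition unif_conv (fs : nat -> R -> R) (f : R -> R) : Prop :=
  forall eps, 0 < eps -> exists N, forall n, (n >= N)%nat ->
    forall p, unit_int p -> Rabs (fs n p - f p) <= eps.

(* Closedness of upper and lower contour sets in Q_b w.r.t. uniform convergence
   (sequential closedness, equivalent to closedness in this metric space). *)
Definition continuous_pref (pref : (R -> R) -> (R -> R) -> Prop) : Prop :=
  forall phi, in_Qb phi ->
    forall (psis : nat -> R -> R) psi,
      (forall n, in_Qb (psis n)) -> in_Qb psi -> unif_conv psis psi ->
      ((forall n, pref (psis n) phi) -> pref psi phi) /\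
      ((forall n, pref phi (psis n)) -> pref phi psi).

Definition monotonic_pref (pref : (R -> R) -> (R -> R) -> Prop) : Prop :=
  forall f g, in_Qb f -> in_Qb g ->
    (forall p, unit_int p -> f p >= g p) -> pref f g.

Definition dual_independence (pref : (R -> R) -> (R -> R) -> Prop) : Prop :=
  forall f g h a, in_Qb f -> in_Qb g -> in_Qb h -> 0 < a < 1 ->
    strict pref f g ->
    strict pref (fun p => a * f p + (1 - a) * h p) (fun p => a * g p + (1 - a) * h p).

Definition represents_on_Qb (U : (R -> R) -> R) (pref : (R -> R) -> (R -> R) -> Prop) : Prop :=
  forall f g, in_Qb f -> in_Qb g -> (strict pref f g <-> U f > U g).

(* Main.v *)
Require Import Defs.
From Stdlib Require Import Reals List Lra Lia Classical ClassicalEpsilon FunctionalExtensionality.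
Open Scope R_scope.

Definition kc (c : R) : R -> R := fun _ => c.
Definition mix (a : R) (f g : R -> R) : R -> R := fun p => a * f p + (1 - a) * g p.

Lemma unit_one : unit_int 1. Proof. unfold unit_int; lra. Qed.

Lemma abs_bounds x M : Rabs x <= M -> -M <= x <= M.
Proof. unfold Rabs; destruct Rcase_abs; lra. Qed.
Lemma abs_le x M : -M <= x <= M -> Rabs x <= M.
Proof. unfold Rabs; destruct Rcase_abs; lra. Qed.

Lemma bounded_nonneg f M : (forall p, unit_int p -> Rabs (f p) <= M) -> 0 <= M.
Proof. intros H. specialize (H 1 unit_one). pose proof (Rabs_pos (f 1)). lra. Qed.

Lemma Qb_const c : in_Qb (kc c).
Proof.
  unfold in_Qb, kc; repeat split.
  - exists (Rabs c); intros; apply Rle_refl.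
  - intros p q _ _ _; apply Rle_refl.
  - intros p _ eps He. exists 1; split; [lra|]. intros.
    replace (c - c) with 0 by ring. rewrite Rabs_R0; lra.
Qed.

Lemma Qb_lin f g a b : in_Qb f -> in_Qb g -> 0 <= a -> 0 <= b ->
  in_Qb (fun p => a * f p + b * g p).
Proof.
  intros [[M1 HM1] [Hm1 Hc1]] [[M2 HM2] [Hm2 Hc2]] Ha Hb.
  repeat split.
  - exists (a*M1 + b*M2). intros p Hp.
    eapply Rle_trans; [apply Rabs_triang|].
    rewrite !Rabs_mult, (Rabs_pos_eq a Ha), (Rabs_pos_eq b Hb).
    specialize (HM1 p Hp); specialize (HM2 p Hp).
    pose proof (Rmult_le_compat_l a _ _ Ha HM1).
    pose proof (Rmult_le_compat_l b _ _ Hb HM2). lra.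
  - intros p q Hp Hq Hpq. specialize (Hm1 p q Hp Hq Hpq); specialize (Hm2 p q Hp Hq Hpq).
    pose proof (Rmult_le_compat_l a _ _ Ha Hm1).
    pose proof (Rmult_le_compat_l b _ _ Hb Hm2). lra.
  - intros p Hp eps He.
    set (e1 := eps/(2*(a+1))). set (e2 := eps/(2*(b+1))).
    assert (He1 : (a+1)*e1 = eps/2) by (unfold e1; field; lra).
    assert (He2 : (b+1)*e2 = eps/2) by (unfold e2; field; lra).
    assert (P1 : 0 < e1) by (unfold e1; apply Rdiv_lt_0_compat; lra).
    assert (P2 : 0 < e2) by (unfold e2; apply Rdiv_lt_0_compat; lra).
    destruct (Hc1 p Hp e1 P1) as [d1 [Hd1 H1]].
    destruct (Hc2 p Hp e2 P2) as [d2 [Hd2 H2]].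
    exists (Rmin d1 d2). split. { apply Rmin_pos; lra. }
    intros q Hq0 Hqp Hd.
    assert (E1 := H1 q Hq0 Hqp (Rlt_le_trans _ _ _ Hd (Rmin_l _ _))).
    assert (E2 := H2 q Hq0 Hqp (Rlt_le_trans _ _ _ Hd (Rmin_r _ _))).
    replace (a * f q + b * g q - (a * f p + b * g p)) with (a*(f q - f p) + b*(g q - g p)) by ring.
    eapply Rle_lt_trans; [apply Rabs_triang|].
    rewrite !Rabs_mult, (Rabs_pos_eq a Ha), (Rabs_pos_eq b Hb).
    pose proof (Rmult_le_compat_l a _ _ Ha (Rlt_le _ _ E1)).
    pose proof (Rmult_le_compat_l b _ _ Hb (Rlt_le _ _ E2)). nra.
Qed.

Lemma Qb_add f g : in_Qb f -> in_Qb g -> in_Qb (fun p => f p + g p).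
Proof.
  intros Hf Hg. replace (fun p => f p + g p) with (fun p => 1 * f p + 1 * g p).
  - apply Qb_lin; auto; lra.
  - apply functional_extensionality; intros; ring.
Qed.

Lemma Qb_scale t f : 0 <= t -> in_Qb f -> in_Qb (fun p => t * f p).
Proof.
  intros Ht Hf. replace (fun p => t * f p) with (fun p => t * f p + 0 * kc 0 p).
  - apply Qb_lin; auto using Qb_const; lra.
  - apply functional_extensionality; intros; unfold kc; ring.
Qed.

Lemma Qb_shift f c : in_Qb f -> in_Qb (fun p => f p + c).
Proof. intros Hf. apply (Qb_add f (kc c) Hf (Qb_const c)). Qed.

Lemma Qb_mix a f g : 0 <= a <= 1 -> in_Qb f -> in_Qb g -> in_Qb (mix a f g).
Proof. intros Ha Hf Hg. unfold mix. apply Qb_lin; auto; lra. Qed.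

Lemma Qb_mul f g : in_Qb f -> in_Qb g ->
  (forall p, unit_int p -> 0 <= f p) -> (forall p, unit_int p -> 0 <= g p) ->
  in_Qb (fun p => f p * g p).
Proof.
  intros [[M1 HM1] [Hm1 Hc1]] [[M2 HM2] [Hm2 Hc2]] Hf0 Hg0.
  assert (M1p := bounded_nonneg _ _ HM1). assert (M2p := bounded_nonneg _ _ HM2).
  repeat split.
  - exists (M1*M2). intros p Hp. rewrite Rabs_mult.
    apply Rmult_le_compat; auto using Rabs_pos.
  - intros p q Hp Hq Hpq. apply Rmult_le_compat; auto.
  - intros p Hp eps He.
    set (e1 := eps/(2*(M2+1))). set (e2 := eps/(2*(M1+1))).
    assert (He1 : (M2+1)*e1 = eps/2) by (unfold e1; field; lra).
    assert (He2 : (M1+1)*e2 = eps/2) by (unfold e2; field; lra).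
    assert (P1 : 0 < e1) by (unfold e1; apply Rdiv_lt_0_compat; lra).
    assert (P2 : 0 < e2) by (unfold e2; apply Rdiv_lt_0_compat; lra).
    destruct (Hc1 p Hp e1 P1) as [d1 [Hd1 H1]].
    destruct (Hc2 p Hp e2 P2) as [d2 [Hd2 H2]].
    exists (Rmin d1 d2). split. { apply Rmin_pos; lra. }
    intros q Hq0 Hqp Hd.
    assert (Hq : unit_int q) by (destruct Hp; split; lra).
    assert (E1 := H1 q Hq0 Hqp (Rlt_le_trans _ _ _ Hd (Rmin_l _ _))).
    assert (E2 := H2 q Hq0 Hqp (Rlt_le_trans _ _ _ Hd (Rmin_r _ _))).
    replace (f q * g q - f p * g p) with (f q * (g q - g p) + g p * (f q - f p)) by ring.
    eapply Rle_lt_trans; [apply Rabs_triang|].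
    rewrite !Rabs_mult.
    assert (A1 : Rabs (f q) <= M1) by auto. assert (A2 : Rabs (g p) <= M2) by auto.
    pose proof (Rabs_pos (g q - g p)). pose proof (Rabs_pos (f q - f p)).
    pose proof (Rmult_le_compat _ _ _ _ (Rabs_pos (f q)) (Rabs_pos _) A1 (Rlt_le _ _ E2)).
    pose proof (Rmult_le_compat _ _ _ _ (Rabs_pos (g p)) (Rabs_pos _) A2 (Rlt_le _ _ E1)).
    nra.
Qed.

Lemma inv_pos n : 0 < / (INR n + 1).
Proof. apply Rinv_0_lt_compat; pose proof (pos_INR n); lra. Qed.

Lemma inv_small eps : 0 < eps -> exists N, forall n, (n >= N)%nat -> / (INR n + 1) <= eps.
Proof.
  intros He. destruct (archimed_cor1 eps He) as [N [HN1 HN2]].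
  exists N. intros n Hn. left. eapply Rle_lt_trans; [|exact HN1].
  apply Rinv_le_contravar. apply lt_0_INR; lia.
  assert (INR N <= INR n) by (apply le_INR; lia). lra.
Qed.

Lemma unif_of_bound fs f : (forall n p, unit_int p -> Rabs (fs n p - f p) <= / (INR n + 1)) ->
  unif_conv fs f.
Proof.
  intros H eps He. destruct (inv_small eps He) as [N HN]. exists N.
  intros n Hn p Hp. eapply Rle_trans; [apply H; auto| apply HN; auto].
Qed.


Lemma strict_trans_l pref f g h : total_preorder_Qb pref -> in_Qb f -> in_Qb g -> in_Qb h ->
  strict pref f g -> pref g h -> strict pref f h.
Proof.
  intros [_ [HT _]] Hf Hg Hh [H1 H2] H3. split.
  - apply (HT f g h); auto.
  - intros H4. apply H2. apply (HT g h f); auto.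
Qed.

Lemma strict_trans_r pref f g h : total_preorder_Qb pref -> in_Qb f -> in_Qb g -> in_Qb h ->
  pref f g -> strict pref g h -> strict pref f h.
Proof.
  intros [_ [HT _]] Hf Hg Hh H1 [H2 H3]. split.
  - apply (HT f g h); auto.
  - intros H4. apply H3. apply (HT h f g); auto.
Qed.

Lemma mono_le pref f g : monotonic_pref pref -> in_Qb f -> in_Qb g ->
  (forall p, unit_int p -> g p <= f p) -> pref f g.
Proof. intros HM Hf Hg H. apply HM; auto. intros; apply Rle_ge; auto. Qed.

Lemma const_strict pref c d : total_preorder_Qb pref -> monotonic_pref pref ->
  dual_independence pref -> strict pref (kc c) (kc d) ->
  forall x y, y < x -> strict pref (kc x) (kc y).
Proof.
  intros HT HM HD Hcd.
  assert (Hcd' : d < c).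
  { destruct (Rlt_dec d c) as [|Hn]; auto. exfalso. destruct Hcd as [_ Hcd]. apply Hcd.
    apply mono_le; auto using Qb_const. intros; unfold kc; lra. }
  assert (Case1 : forall x y, y < x -> x - y < c - d -> strict pref (kc x) (kc y)).
  { intros x y Hxy Hs.
    set (a := (x - y) / (c - d)).
    assert (Ea : a * (c - d) = x - y) by (unfold a; field; lra).
    assert (Ha : 0 < a < 1) by (split; nra).
    set (h := (x - a * c) / (1 - a)).
    assert (Eh : (1 - a) * h = x - a * c) by (unfold h; field; lra).
    pose proof (HD (kc c) (kc d) (kc h) a (Qb_const _) (Qb_const _) (Qb_const _) Ha Hcd) as H.
    replace (fun p => a * kc c p + (1 - a) * kc h p) with (kc x) in H.
    2:{ apply functional_extensionality; intros; unfold kc. rewrite Eh; ring. }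
    replace (fun p => a * kc d p + (1 - a) * kc h p) with (kc y) in H.
    2:{ apply functional_extensionality; intros; unfold kc. rewrite Eh.
        replace (a * d + (x - a * c)) with (x - a * (c - d)) by ring. rewrite Ea; ring. }
    exact H. }
  intros x y Hxy. destruct (Rlt_dec (x - y) (c - d)) as [Hs|Hs]; auto.
  apply strict_trans_l with (kc (x - (c - d)/2)); auto using Qb_const.
  - apply Case1; lra.
  - apply mono_le; auto using Qb_const. intros; unfold kc; lra.
Qed.

Definition Good (pref : (R->R)->(R->R)->Prop) : Prop :=
  total_preorder_Qb pref /\ continuous_pref pref /\ monotonic_pref pref /\
  dual_independence pref /\ (forall x y, y < x -> strict pref (kc x) (kc y)).

Lemma G_T pref : Good pref -> total_preorder_Qb pref. Proof. intros G; apply G. Qed.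
Lemma G_C pref : Good pref -> continuous_pref pref. Proof. intros G; apply G. Qed.
Lemma G_M pref : Good pref -> monotonic_pref pref. Proof. intros G; apply G. Qed.
Lemma G_D pref : Good pref -> dual_independence pref. Proof. intros G; apply G. Qed.
Lemma G_K pref : Good pref -> forall x y, y < x -> strict pref (kc x) (kc y). Proof. intros G; apply G. Qed.

Lemma G_trans pref f g h : Good pref -> in_Qb f -> in_Qb g -> in_Qb h -> pref f g -> pref g h -> pref f h.
Proof. intros G. destruct (G_T _ G) as [_ [H _]]. apply H. Qed.
Lemma G_refl pref f : Good pref -> in_Qb f -> pref f f.
Proof. intros G. destruct (G_T _ G) as [H _]. apply H. Qed.
Lemma G_total pref f g : Good pref -> in_Qb f -> in_Qb g -> pref f g \/ pref g f.
Proof. intros G. destruct (G_T _ G) as [_ [_ H]]. apply H. Qed.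

Lemma IND pref f g a x : Good pref -> in_Qb f -> in_Qb g -> 0 < a < 1 ->
  pref f (kc x) -> pref (kc x) f ->
  pref (mix a f g) (mix a (kc x) g) /\ pref (mix a (kc x) g) (mix a f g).
Proof.
  intros G Hf Hg Ha H1 H2.
  assert (Qm : forall h, in_Qb h -> in_Qb (mix a h g)) by (intros; apply Qb_mix; auto; lra).
  assert (Hconv : forall s, -1 <= s <= 1 -> unif_conv (fun n => mix a (kc (x + s * / (INR n + 1))) g) (mix a (kc x) g)).
  { intros s Hs. apply unif_of_bound. intros n p Hp. unfold mix, kc.
    replace (a * (x + s * / (INR n + 1)) + (1 - a) * g p - (a * x + (1 - a) * g p))
      with (a * s * / (INR n + 1)) by ring.
    pose proof (inv_pos n). assert (-1 <= a*s <= 1) by (split; nra).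
    set (e := / (INR n + 1)) in *. apply abs_le. split; nra. }
  split.
  - apply (proj2 (G_C _ G (mix a f g) (Qm f Hf) (fun n => mix a (kc (x + (-1) * / (INR n + 1))) g)
       (mix a (kc x) g) (fun n => Qm _ (Qb_const _)) (Qm _ (Qb_const _)) (Hconv (-1) ltac:(lra)))).
    intros n. apply (G_D _ G); auto using Qb_const.
    apply strict_trans_r with (kc x); auto using Qb_const, (G_T _ G).
    apply (G_K _ G). pose proof (inv_pos n). lra.
  - apply (proj1 (G_C _ G (mix a f g) (Qm f Hf) (fun n => mix a (kc (x + 1 * / (INR n + 1))) g)
       (mix a (kc x) g) (fun n => Qm _ (Qb_const _)) (Qm _ (Qb_const _)) (Hconv 1 ltac:(lra)))).
    intros n. apply (G_D _ G); auto using Qb_const.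
    apply strict_trans_l with (kc x); auto using Qb_const, (G_T _ G).
    apply (G_K _ G). pose proof (inv_pos n). lra.
Qed.

Lemma CE_exists pref f : Good pref -> in_Qb f -> exists x, pref f (kc x) /\ pref (kc x) f.
Proof.
  intros G Hf. pose proof Hf as [[M HM] _].
  set (S := fun c => pref f (kc c)).
  assert (Mle : forall c, c >= M -> pref (kc c) f).
  { intros c Hc. apply mono_le; auto using Qb_const, (G_M _ G). intros p Hp; unfold kc.
    specialize (HM p Hp). apply abs_bounds in HM. lra. }
  assert (HS0 : S (-M)).
  { unfold S. apply mono_le; auto using Qb_const, (G_M _ G). intros p Hp; unfold kc.
    specialize (HM p Hp). apply abs_bounds in HM; lra. }
  assert (Hub : forall y, pref (kc y) f -> forall c, S c -> c <= y).
  { intros y Hy c Hc. destruct (Rle_dec c y) as [|Hn]; auto. exfalso.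
    assert (Hs : strict pref (kc c) f).
    { apply strict_trans_l with (kc y); auto using Qb_const, (G_T _ G).
      apply (G_K _ G); lra. }
    apply (proj2 Hs). exact Hc. }
  destruct (completeness S) as [x [Hx1 Hx2]].
  { exists M. intros c Hc. apply (Hub M (Mle M ltac:(lra))); auto. }
  { exists (-M); auto. }
  exists x. split.
  - apply (proj2 (G_C _ G f Hf (fun n => kc (x - / (INR n + 1))) (kc x)
       (fun n => Qb_const _) (Qb_const _) ltac:(apply unif_of_bound; intros n p Hp; unfold kc;
         pose proof (inv_pos n); apply abs_le; lra))).
    intro n. destruct (classic (S (x - / (INR n + 1)))) as [H0|H0]; [exact H0|].
    exfalso. pose proof (inv_pos n).
    assert (x <= x - / (INR n + 1)).
    { apply Hx2. intros c Hc. apply Hub; auto.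
      destruct (G_total _ f (kc (x - / (INR n + 1))) G Hf (Qb_const _)); [contradiction|assumption]. }
    lra.
  - apply (proj1 (G_C _ G f Hf (fun n => kc (x + / (INR n + 1))) (kc x)
       (fun n => Qb_const _) (Qb_const _) ltac:(apply unif_of_bound; intros n p Hp; unfold kc;
         pose proof (inv_pos n); apply abs_le; lra))).
    intro n. pose proof (inv_pos n). destruct (classic (S (x + / (INR n + 1)))) as [H0|H0].
    + exfalso. pose proof (Hx1 _ H0). lra.
    + destruct (G_total _ f (kc (x + / (INR n + 1))) G Hf (Qb_const _)); [contradiction|assumption].
Qed.

Definition CE (pref : (R->R)->(R->R)->Prop) (f : R -> R) : R :=
  epsilon (inhabits 0) (fun x => pref f (kc x) /\ pref (kc x) f).

Lemma CE_spec pref f : Good pref -> in_Qb f -> pref f (kc (CE pref f)) /\ pref (kc (CE pref f)) f.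
Proof. intros G Hf. unfold CE. apply epsilon_spec. apply CE_exists; auto. Qed.

Lemma CE_unique pref f x : Good pref -> in_Qb f -> pref f (kc x) -> pref (kc x) f -> CE pref f = x.
Proof.
  intros G Hf H1 H2. destruct (CE_spec pref f G Hf) as [A B]. set (y := CE pref f) in *.
  destruct (Rtotal_order x y) as [Hl|[He|Hg]]; auto.
  - exfalso. apply (proj2 (G_K _ G y x Hl)). apply G_trans with f; auto using Qb_const.
  - exfalso. apply (proj2 (G_K _ G x y Hg)). apply G_trans with f; auto using Qb_const.
Qed.

Lemma CE_mono pref f g : Good pref -> in_Qb f -> in_Qb g -> (forall p, unit_int p -> g p <= f p) ->
  CE pref g <= CE pref f.
Proof.
  intros G Hf Hg H. destruct (CE_spec pref f G Hf) as [A B]. destruct (CE_spec pref g G Hg) as [C D].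
  destruct (Rle_dec (CE pref g) (CE pref f)) as [|Hn]; auto. exfalso.
  apply (proj2 (G_K _ G (CE pref g) (CE pref f) ltac:(lra))).
  apply G_trans with f; auto using Qb_const.
  apply G_trans with g; auto using Qb_const.
  apply mono_le; auto using (G_M _ G).
Qed.

Lemma CE_ext pref f g : Good pref -> in_Qb f -> in_Qb g -> (forall p, unit_int p -> f p = g p) ->
  CE pref f = CE pref g.
Proof.
  intros G Hf Hg H. apply Rle_antisym; apply CE_mono; auto; intros p Hp; rewrite H; auto; lra.
Qed.

Lemma CE_const pref c : Good pref -> CE pref (kc c) = c.
Proof. intros G. apply CE_unique; auto using Qb_const; apply G_refl; auto using Qb_const. Qed.

Lemma CE_mix pref a f g : Good pref -> 0 < a < 1 -> in_Qb f -> in_Qb g ->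
  CE pref (mix a f g) = a * CE pref f + (1 - a) * CE pref g.
Proof.
  intros G Ha Hf Hg. set (x := CE pref f). set (y := CE pref g).
  destruct (CE_spec pref f G Hf) as [A B]. destruct (CE_spec pref g G Hg) as [C D].
  fold x in A, B. fold y in C, D.
  destruct (IND pref f g a x G Hf Hg Ha A B) as [I1 I2].
  assert (E1 : mix a (kc x) g = mix (1 - a) g (kc x))
    by (apply functional_extensionality; intros; unfold mix, kc; ring).
  rewrite E1 in I1, I2.
  destruct (IND pref g (kc x) (1 - a) y G Hg (Qb_const _) ltac:(lra) C D) as [I3 I4].
  assert (E2 : mix (1 - a) (kc y) (kc x) = kc (a * x + (1 - a) * y))
    by (apply functional_extensionality; intros; unfold mix, kc; ring).
  rewrite E2 in I3, I4.
  assert (Q1 : in_Qb (mix a f g)) by (apply Qb_mix; auto; lra).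
  assert (Q2 : in_Qb (mix (1 - a) g (kc x))) by (apply Qb_mix; auto using Qb_const; lra).
  apply CE_unique; auto.
  - apply G_trans with (mix (1 - a) g (kc x)); auto using Qb_const.
  - apply G_trans with (mix (1 - a) g (kc x)); auto using Qb_const.
Qed.

Lemma CE_scale pref t f : Good pref -> 0 <= t -> in_Qb f -> CE pref (fun p => t * f p) = t * CE pref f.
Proof.
  intros G Ht Hf.
  destruct (Rtotal_order t 1) as [Hl|[He|Hg]].
  - destruct Ht as [Ht|Ht].
    + replace (fun p => t * f p) with (mix t f (kc 0))
        by (apply functional_extensionality; intros; unfold mix, kc; ring).
      rewrite CE_mix, CE_const; auto using Qb_const; ring.
    + subst t. assert (E : CE pref (fun p => 0 * f p) = CE pref (kc 0)).
      { apply CE_ext; auto using Qb_const. apply Qb_scale; auto; lra. intros; unfold kc; ring. }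
      rewrite E, CE_const; auto; ring.
  - subst t. assert (E : CE pref (fun p => 1 * f p) = CE pref f).
    { apply CE_ext; auto. apply Qb_scale; auto; lra. intros; ring. }
    rewrite E; ring.
  - assert (Q : in_Qb (fun p => t * f p)) by (apply Qb_scale; auto; lra).
    assert (E : f = mix (/ t) (fun p => t * f p) (kc 0)).
    { apply functional_extensionality; intros; unfold mix, kc; field; lra. }
    assert (Hi : 0 < / t < 1).
    { split. apply Rinv_0_lt_compat; lra. rewrite <- Rinv_1. apply Rinv_lt_contravar; lra. }
    transitivity (t * (/ t * CE pref (fun p => t * f p) + (1 - / t) * CE pref (kc 0))).
    + rewrite CE_const; auto. field. lra.
    + rewrite <- CE_mix; auto using Qb_const. rewrite <- E. reflexivity.
Qed.

Lemma CE_add pref f g : Good pref -> in_Qb f -> in_Qb g ->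
  CE pref (fun p => f p + g p) = CE pref f + CE pref g.
Proof.
  intros G Hf Hg.
  replace (fun p => f p + g p) with (fun p => 2 * mix (1/2) f g p)
    by (apply functional_extensionality; intros; unfold mix; field).
  rewrite CE_scale, CE_mix; auto; try lra. apply Qb_mix; auto; lra.
Qed.

Lemma CE_shift pref f c : Good pref -> 0 <= c -> in_Qb f -> CE pref (fun p => f p + c) = CE pref f + c.
Proof.
  intros G Hc Hf. pose proof (CE_add pref f (kc c) G Hf (Qb_const c)) as E.
  unfold kc at 1 in E. rewrite E, CE_const; auto.
Qed.

Lemma LipV pref g h g' h' d : Good pref -> in_Qb g -> in_Qb h -> in_Qb g' -> in_Qb h' ->
  (forall p, unit_int p -> Rabs ((g p - h p) - (g' p - h' p)) <= d) ->
  Rabs ((CE pref g - CE pref h) - (CE pref g' - CE pref h')) <= d.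
Proof.
  intros G Hg Hh Hg' Hh' H.
  assert (Hd : 0 <= d) by (pose proof (H 1 unit_one); pose proof (Rabs_pos ((g 1 - h 1) - (g' 1 - h' 1))); lra).
  assert (L1 : CE pref (fun p => g p + h' p) <= CE pref (fun p => g' p + h p + d)).
  { apply CE_mono; auto using Qb_add, Qb_shift. intros p Hp. specialize (H p Hp).
    apply abs_bounds in H. lra. }
  assert (L2 : CE pref (fun p => g' p + h p) <= CE pref (fun p => g p + h' p + d)).
  { apply CE_mono; auto using Qb_add, Qb_shift. intros p Hp. specialize (H p Hp).
    apply abs_bounds in H. lra. }
  assert (S1 : CE pref (fun p => g' p + h p + d) = CE pref g' + CE pref h + d).
  { rewrite <- CE_add; auto. apply (CE_shift pref (fun p => g' p + h p)); auto using Qb_add. }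
  assert (S2 : CE pref (fun p => g p + h' p + d) = CE pref g + CE pref h' + d).
  { rewrite <- CE_add; auto. apply (CE_shift pref (fun p => g p + h' p)); auto using Qb_add. }
  rewrite S1, CE_add in L1; auto. rewrite S2, CE_add in L2; auto.
  apply abs_le. lra.
Qed.

Lemma rep_CE pref f g : Good pref -> in_Qb f -> in_Qb g ->
  (strict pref f g <-> CE pref f > CE pref g).
Proof.
  intros G Hf Hg. destruct (CE_spec pref f G Hf) as [A B]. destruct (CE_spec pref g G Hg) as [C D].
  split.
  - intros [H1 H2]. destruct (Rtotal_order (CE pref f) (CE pref g)) as [Hl|[He|Hgt]]; auto.
    + exfalso. apply (proj2 (G_K _ G _ _ Hl)).
      apply G_trans with f; auto using Qb_const. apply G_trans with g; auto using Qb_const.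
    + exfalso. apply H2. rewrite He in B. apply G_trans with (kc (CE pref g)); auto using Qb_const.
  - intros H. apply strict_trans_r with (kc (CE pref f)); auto using Qb_const, (G_T _ G).
    apply strict_trans_l with (kc (CE pref g)); auto using Qb_const, (G_T _ G).
    apply (G_K _ G); lra.
Qed.

Lemma V_scale_ex a g h : in_Qb g -> in_Qb h -> exists g' h', in_Qb g' /\ in_Qb h' /\
  (forall p, g' p - h' p = a * (g p - h p)) /\
  (forall pref, Good pref -> CE pref g' - CE pref h' = a * (CE pref g - CE pref h)).
Proof.
  intros Hg Hh. destruct (Rle_dec 0 a) as [Ha|Ha].
  - exists (fun p => a * g p), (fun p => a * h p). refine (conj _ (conj _ (conj _ _))); auto using Qb_scale.
    + intros; ring.
    + intros pref G. rewrite !CE_scale; auto. ring.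
  - exists (fun p => (- a) * h p), (fun p => (- a) * g p).
    refine (conj _ (conj _ (conj _ _))); try (apply Qb_scale; auto; lra).
    + intros; ring.
    + intros pref G. rewrite !CE_scale; auto; try lra; ring.
Qed.

Lemma V_add_ex g1 h1 g2 h2 : in_Qb g1 -> in_Qb h1 -> in_Qb g2 -> in_Qb h2 -> exists g' h', in_Qb g' /\ in_Qb h' /\
  (forall p, g' p - h' p = (g1 p - h1 p) + (g2 p - h2 p)) /\
  (forall pref, Good pref -> CE pref g' - CE pref h' = (CE pref g1 - CE pref h1) + (CE pref g2 - CE pref h2)).
Proof.
  intros. exists (fun p => g1 p + g2 p), (fun p => h1 p + h2 p). refine (conj _ (conj _ (conj _ _))); auto using Qb_add.
  - intros; ring.
  - intros pref G. rewrite !CE_add; auto. ring.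
Qed.

Lemma V_lin_ex a b g1 h1 g2 h2 : in_Qb g1 -> in_Qb h1 -> in_Qb g2 -> in_Qb h2 -> exists g' h', in_Qb g' /\ in_Qb h' /\
  (forall p, g' p - h' p = a * (g1 p - h1 p) + b * (g2 p - h2 p)) /\
  (forall pref, Good pref -> CE pref g' - CE pref h' = a * (CE pref g1 - CE pref h1) + b * (CE pref g2 - CE pref h2)).
Proof.
  intros Q1 Q2 Q3 Q4.
  destruct (V_scale_ex a g1 h1 Q1 Q2) as [u1 [v1 [U1 [V1 [E1 F1]]]]].
  destruct (V_scale_ex b g2 h2 Q3 Q4) as [u2 [v2 [U2 [V2 [E2 F2]]]]].
  destruct (V_add_ex u1 v1 u2 v2 U1 V1 U2 V2) as [g' [h' [G' [H' [E F]]]]].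
  exists g', h'. refine (conj _ (conj _ (conj _ _))); auto.
  - intros p. rewrite E, E1, E2. ring.
  - intros pref G. rewrite F, F1, F2; auto.
Qed.

Definition approxV (f : R -> R) : Prop := forall eps, 0 < eps -> exists g h, in_Qb g /\ in_Qb h /\
  forall p, unit_int p -> Rabs (f p - (g p - h p)) <= eps.

Definition Pval pref (f : R -> R) (l : R) : Prop := forall eps g h, 0 < eps -> in_Qb g -> in_Qb h ->
  (forall p, unit_int p -> Rabs (f p - (g p - h p)) <= eps) ->
  Rabs (l - (CE pref g - CE pref h)) <= eps.

Definition Lfun pref (f : R -> R) : R := epsilon (inhabits 0) (Pval pref f).

Lemma tri3 x y z e1 e2 : Rabs (x - y) <= e1 -> Rabs (x - z) <= e2 -> Rabs (y - z) <= e1 + e2.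
Proof. intros H1 H2. apply abs_bounds in H1. apply abs_bounds in H2. apply abs_le. lra. Qed.

Lemma Pval_exists pref f : Good pref -> approxV f -> exists l, Pval pref f l.
Proof.
  intros G Ha.
  destruct (Ha 1 ltac:(lra)) as [g0 [h0 [Q0 [R0 H0]]]].
  set (A := fun r => exists eps g h, 0 < eps /\ in_Qb g /\ in_Qb h /\
     (forall p, unit_int p -> Rabs (f p - (g p - h p)) <= eps) /\ r = CE pref g - CE pref h - eps).
  assert (UB : forall eps g h, 0 < eps -> in_Qb g -> in_Qb h ->
     (forall p, unit_int p -> Rabs (f p - (g p - h p)) <= eps) ->
     forall r, A r -> r <= CE pref g - CE pref h + eps).
  { intros eps g h He Hg Hh Hgh r [e' [g' [h' [He' [Hg' [Hh' [Hgh' Er]]]]]]].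
    assert (L := LipV pref g' h' g h (e' + eps) G Hg' Hh' Hg Hh
      ltac:(intros p Hp; apply (tri3 (f p)); auto)).
    apply abs_bounds in L. lra. }
  destruct (completeness A) as [l [Hl1 Hl2]].
  { exists (CE pref g0 - CE pref h0 + 1). intros r Hr. apply (UB 1 g0 h0); auto; lra. }
  { exists (CE pref g0 - CE pref h0 - 1). exists 1, g0, h0. refine (conj _ (conj Q0 (conj R0 (conj H0 _)))); [lra|reflexivity]. }
  exists l. intros eps g h He Hg Hh Hgh. apply abs_le. split.
  - assert (CE pref g - CE pref h - eps <= l).
    { apply Hl1. exists eps, g, h. refine (conj He (conj Hg (conj Hh (conj Hgh _)))); reflexivity. }
    lra.
  - assert (l <= CE pref g - CE pref h + eps).
    { apply Hl2. intros r Hr. apply (UB eps g h); auto. }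
    lra.
Qed.

Lemma Pval_unique pref f l l' : approxV f -> Pval pref f l -> Pval pref f l' -> l = l'.
Proof.
  intros Ha P P'. destruct (Req_dec l l') as [|Hn]; auto. exfalso.
  assert (Hpos : 0 < Rabs (l - l')) by (apply Rabs_pos_lt; lra).
  set (e := Rabs (l - l') / 4).
  assert (He : 0 < e) by (unfold e; lra).
  destruct (Ha e He) as [g [h [Hg [Hh Hgh]]]].
  pose proof (P e g h He Hg Hh Hgh) as A1. pose proof (P' e g h He Hg Hh Hgh) as A2.
  apply abs_bounds in A1. apply abs_bounds in A2.
  assert (Rabs (l - l') <= 2 * e) by (apply abs_le; lra).
  unfold e in *. lra.
Qed.

Lemma L_spec pref f : Good pref -> approxV f -> Pval pref f (Lfun pref f).
Proof. intros G Ha. unfold Lfun. apply epsilon_spec. apply Pval_exists; auto. Qed.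

Lemma L_Qb pref f : Good pref -> in_Qb f -> Lfun pref f = CE pref f.
Proof.
  intros G Hf.
  assert (Ha : approxV f).
  { intros eps He. exists f, (kc 0). refine (conj Hf (conj (Qb_const 0) _)). intros p Hp. unfold kc.
    replace (f p - (f p - 0)) with 0 by ring. rewrite Rabs_R0; lra. }
  apply (Pval_unique pref f); auto using L_spec.
  intros eps g h He Hg Hh Hgh.
  assert (L := LipV pref f (kc 0) g h eps G Hf (Qb_const 0) Hg Hh
     ltac:(intros p Hp; unfold kc; rewrite Rminus_0_r; auto)).
  rewrite CE_const, Rminus_0_r in L; auto.
Qed.

Lemma le_eps x eps K : 0 <= K -> (forall e, 0 < e -> x <= eps + K * e) -> x <= eps.
Proof.
  intros HK H. destruct (Rle_dec x eps) as [|Hn]; auto. exfalso.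
  set (e := (x - eps) / (2 * (K + 1))).
  assert (He : (K + 1) * e = (x - eps) / 2) by (unfold e; field; lra).
  assert (Hp : 0 < e) by (unfold e; apply Rdiv_lt_0_compat; lra).
  specialize (H e Hp). nra.
Qed.

Lemma lin_bound a b x y e : Rabs x <= e -> Rabs y <= e -> Rabs (a * x + b * y) <= (Rabs a + Rabs b) * e.
Proof.
  intros Hx Hy. eapply Rle_trans; [apply Rabs_triang|]. rewrite !Rabs_mult.
  pose proof (Rabs_pos a). pose proof (Rabs_pos b).
  pose proof (Rmult_le_compat_l _ _ _ (Rabs_pos a) Hx).
  pose proof (Rmult_le_compat_l _ _ _ (Rabs_pos b) Hy). nra.
Qed.

Lemma approx_lin f g a b : approxV f -> approxV g -> approxV (fun p => a * f p + b * g p).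
Proof.
  intros Hf Hg eps He.
  set (e := eps / (Rabs a + Rabs b + 1)).
  pose proof (Rabs_pos a) as Pa. pose proof (Rabs_pos b) as Pb.
  assert (Ee : (Rabs a + Rabs b + 1) * e = eps) by (unfold e; field; lra).
  assert (Hp : 0 < e) by (unfold e; apply Rdiv_lt_0_compat; lra).
  destruct (Hf e Hp) as [g1 [h1 [Q1 [R1 H1]]]].
  destruct (Hg e Hp) as [g2 [h2 [Q2 [R2 H2]]]].
  destruct (V_lin_ex a b g1 h1 g2 h2 Q1 R1 Q2 R2) as [g' [h' [G' [H' [E _]]]]].
  exists g', h'. refine (conj G' (conj H' _)). intros p Hp'. rewrite E.
  replace (a * f p + b * g p - (a * (g1 p - h1 p) + b * (g2 p - h2 p)))
    with (a * (f p - (g1 p - h1 p)) + b * (g p - (g2 p - h2 p))) by ring.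
  eapply Rle_trans; [apply lin_bound; auto|]. nra.
Qed.

Lemma L_lin pref f g a b : Good pref -> approxV f -> approxV g ->
  Lfun pref (fun p => a * f p + b * g p) = a * Lfun pref f + b * Lfun pref g.
Proof.
  intros G Hf Hg. apply (Pval_unique pref (fun p => a * f p + b * g p)); auto using approx_lin, L_spec.
  intros eps G0 H0 He QG QH Happ.
  pose proof (Rabs_pos a) as Pa. pose proof (Rabs_pos b) as Pb.
  apply le_eps with (K := 2 * (Rabs a + Rabs b)); [lra|].
  intros e' He'.
  destruct (Hf e' He') as [g1 [h1 [Q1 [R1 H1]]]].
  destruct (Hg e' He') as [g2 [h2 [Q2 [R2 H2]]]].
  destruct (V_lin_ex a b g1 h1 g2 h2 Q1 R1 Q2 R2) as [g' [h' [G' [H' [E F]]]]].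
  assert (L1 : Rabs ((CE pref G0 - CE pref H0) - (CE pref g' - CE pref h')) <= eps + (Rabs a + Rabs b) * e').
  { apply LipV; auto. intros p Hp. apply (tri3 (a * f p + b * g p)); auto.
    rewrite E.
    replace (a * f p + b * g p - (a * (g1 p - h1 p) + b * (g2 p - h2 p)))
      with (a * (f p - (g1 p - h1 p)) + b * (g p - (g2 p - h2 p))) by ring.
    apply lin_bound; auto. }
  pose proof (L_spec pref f G Hf e' g1 h1 He' Q1 R1 H1) as A1.
  pose proof (L_spec pref g G Hg e' g2 h2 He' Q2 R2 H2) as A2.
  assert (L2 : Rabs (a * Lfun pref f + b * Lfun pref g - (CE pref g' - CE pref h')) <= (Rabs a + Rabs b) * e').
  { rewrite F; auto.
    replace (a * Lfun pref f + b * Lfun pref g - (a * (CE pref g1 - CE pref h1) + b * (CE pref g2 - CE pref h2)))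
      with (a * (Lfun pref f - (CE pref g1 - CE pref h1)) + b * (Lfun pref g - (CE pref g2 - CE pref h2))) by ring.
    apply lin_bound; auto. }
  apply abs_bounds in L1. apply abs_bounds in L2. apply abs_le. lra.
Qed.

Lemma L_bound pref f M : Good pref -> approxV f -> (forall p, unit_int p -> Rabs (f p) <= M) ->
  Rabs (Lfun pref f) <= 1 * M.
Proof.
  intros G Hf HM. rewrite Rmult_1_l.
  apply le_eps with (K := 2); [lra|]. intros e He.
  destruct (Hf e He) as [g [h [Q [R1 H]]]].
  assert (L := LipV pref g h (kc 0) (kc 0) (M + e) G Q R1 (Qb_const 0) (Qb_const 0)
     ltac:(intros p Hp; unfold kc; specialize (H p Hp); specialize (HM p Hp);
           apply abs_bounds in H; apply abs_bounds in HM; apply abs_le; lra)).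
  rewrite CE_const in L; auto.
  pose proof (L_spec pref f G Hf e g h He Q R1 H) as A.
  apply abs_bounds in L. apply abs_bounds in A. apply abs_le. lra.
Qed.

Definition inV (f : R -> R) : Prop := exists g h, in_Qb g /\ in_Qb h /\ forall p, unit_int p -> f p = g p - h p.

Lemma V_ext f f' : inV f -> (forall p, unit_int p -> f p = f' p) -> inV f'.
Proof.
  intros [g [h [Hg [Hh E]]]] H. exists g, h. refine (conj Hg (conj Hh _)).
  intros p Hp. rewrite <- H; auto.
Qed.

Lemma V_lin f g a b : inV f -> inV g -> inV (fun p => a * f p + b * g p).
Proof.
  intros [g1 [h1 [Q1 [R1 E1]]]] [g2 [h2 [Q2 [R2 E2]]]].
  destruct (V_lin_ex a b g1 h1 g2 h2 Q1 R1 Q2 R2) as [g' [h' [G' [H' [E _]]]]].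
  exists g', h'. refine (conj G' (conj H' _)). intros p Hp. rewrite E, E1, E2; auto.
Qed.

Lemma V_const c : inV (kc c).
Proof. exists (kc c), (kc 0). refine (conj (Qb_const c) (conj (Qb_const 0) _)). intros; unfold kc; ring. Qed.

Lemma V_nonneg f : inV f -> exists g h, in_Qb g /\ in_Qb h /\
  (forall p, unit_int p -> 0 <= g p) /\ (forall p, unit_int p -> 0 <= h p) /\
  forall p, unit_int p -> f p = g p - h p.
Proof.
  intros [g [h [Hg [Hh E]]]].
  pose proof Hg as [[M1 HM1] _]. pose proof Hh as [[M2 HM2] _].
  pose proof (bounded_nonneg _ _ HM1). pose proof (bounded_nonneg _ _ HM2).
  exists (fun p => g p + (M1 + M2)), (fun p => h p + (M1 + M2)).
  refine (conj (Qb_shift _ _ Hg) (conj (Qb_shift _ _ Hh) (conj _ (conj _ _)))).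
  - intros p Hp. specialize (HM1 p Hp). apply abs_bounds in HM1. lra.
  - intros p Hp. specialize (HM2 p Hp). apply abs_bounds in HM2. lra.
  - intros p Hp. rewrite E; auto. ring.
Qed.

Lemma V_mul f g : inV f -> inV g -> inV (fun p => f p * g p).
Proof.
  intros Hf Hg.
  destruct (V_nonneg f Hf) as [g1 [h1 [Q1 [R1 [P1 [P1' E1]]]]]].
  destruct (V_nonneg g Hg) as [g2 [h2 [Q2 [R2 [P2 [P2' E2]]]]]].
  exists (fun p => (fun p => g1 p * g2 p) p + (fun p => h1 p * h2 p) p),
         (fun p => (fun p => g1 p * h2 p) p + (fun p => h1 p * g2 p) p).
  refine (conj (Qb_add _ _ _ _) (conj (Qb_add _ _ _ _) _)); try (apply Qb_mul; auto).
  intros p Hp. rewrite E1, E2; auto. ring.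
Qed.

Definition step (t : R) : R -> R := fun p => if Rlt_dec t p then 1 else 0.

Lemma Qb_step t : in_Qb (step t).
Proof.
  unfold step. split; [|split].
  - exists 1. intros p _. destruct (Rlt_dec t p); rewrite ?Rabs_R1, ?Rabs_R0; lra.
  - intros p q _ _ Hpq. destruct (Rlt_dec t p); destruct (Rlt_dec t q); lra.
  - intros p Hp eps He. destruct (Rlt_dec t p) as [Htp|Htp].
    + exists (p - t). split; [lra|]. intros q Hq Hqp Hd.
      destruct (Rlt_dec t q); [|lra]. replace (1 - 1) with 0 by ring. rewrite Rabs_R0; lra.
    + exists 1. split; [lra|]. intros q Hq Hqp Hd.
      destruct (Rlt_dec t q); [lra|]. replace (0 - 0) with 0 by ring. rewrite Rabs_R0; lra.
Qed.

Definition ind (A : R -> Prop) : R -> R := fun p => if excluded_middle_informative (A p) then 1 else 0.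

Lemma V_ind A : in_Sigma A -> inV (ind A).
Proof.
  induction 1 as [a b Ha Hab Hb | A B _ IA _ IB | A B _ IA _ IB | A _ IA].
  - exists (step a), (step b). refine (conj (Qb_step a) (conj (Qb_step b) _)).
    intros p Hp. unfold ind, step.
    destruct (excluded_middle_informative (a < p <= b)); destruct (Rlt_dec a p); destruct (Rlt_dec b p); lra.
  - apply V_ext with (fun p => 1 * (fun p => 1 * ind A p + 1 * ind B p) p + (-1) * (fun p => ind A p * ind B p) p).
    + apply V_lin; [apply V_lin; auto| apply V_mul; auto].
    + intros p Hp. unfold ind.
      destruct (excluded_middle_informative (A p)); destruct (excluded_middle_informative (B p));
      destruct (excluded_middle_informative (A p \/ B p)); try tauto; ring.
  - apply V_ext with (fun p => ind A p * ind B p).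
    + apply V_mul; auto.
    + intros p Hp. unfold ind.
      destruct (excluded_middle_informative (A p)); destruct (excluded_middle_informative (B p));
      destruct (excluded_middle_informative (A p /\ B p)); try tauto; ring.
  - apply V_ext with (fun p => 1 * kc 1 p + (-1) * ind A p).
    + apply V_lin; auto using V_const.
    + intros p Hp. unfold ind, kc.
      destruct (excluded_middle_informative (A p));
      destruct (excluded_middle_informative (unit_int p /\ ~ A p)); try tauto; ring.
Qed.

Fixpoint sumL (l : list (R * (R -> Prop))) (p : R) : R :=
  match l with nil => 0 | c :: l' => fst c * ind (snd c) p + sumL l' p end.

Fixpoint Disj (l : list (R * (R -> Prop))) : Prop :=
  match l with nil => True
  | c :: l' => (forall d, In d l' -> forall p, ~ (snd c p /\ snd d p)) /\ Disj l' end.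

Lemma nth_Disj l : (forall i j, (i < length l)%nat -> (j < length l)%nat -> i <> j ->
       forall p, ~ (snd (nth i l dflt_piece) p /\ snd (nth j l dflt_piece) p)) -> Disj l.
Proof.
  induction l as [|c l IH]; simpl; auto. intros H. split.
  - intros d Hd p. destruct (In_nth l d dflt_piece Hd) as [n [Hn En]].
    pose proof (H 0%nat (S n) ltac:(lia) ltac:(lia) ltac:(lia) p) as K. simpl in K. rewrite En in K. exact K.
  - apply IH. intros i j Hi Hj Hij p. apply (H (S i) (S j)); simpl; lia.
Qed.

Lemma sum_zero l p : (forall c, In c l -> ~ snd c p) -> sumL l p = 0.
Proof.
  induction l as [|c l IH]; simpl; auto. intros H.
  rewrite IH; auto. unfold ind. destruct (excluded_middle_informative (snd c p)) as [h|h].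
  - exfalso; apply (H c); auto.
  - ring.
Qed.

Lemma sum_one l : Disj l -> forall c p, In c l -> snd c p -> sumL l p = fst c.
Proof.
  induction l as [|d l IH]; simpl; [tauto|]. intros [HD HL] c p [E|Hc] Hp.
  - subst d. rewrite sum_zero.
    + unfold ind. destruct (excluded_middle_informative (snd c p)); [ring|tauto].
    + intros e He He'. apply (HD e He p). tauto.
  - rewrite (IH HL c p Hc Hp). unfold ind.
    destruct (excluded_middle_informative (snd d p)) as [h|h].
    + exfalso. apply (HD c Hc p). tauto.
    + ring.
Qed.

Lemma V_sum l : Forall (fun c => in_Sigma (snd c)) l -> inV (sumL l).
Proof.
  induction l as [|c l IH]; intros HF.
  - apply V_ext with (kc 0); auto using V_const.
  - inversion HF; subst.
    apply V_ext with (fun p => fst c * ind (snd c) p + 1 * sumL l p).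
    + apply V_lin; auto using V_ind.
    + intros; simpl; ring.
Qed.

Lemma simple_V s : simple_fn s -> inV s.
Proof.
  intros [l [HF [HD Hs]]]. apply V_ext with (sumL l); auto using V_sum.
  intros p Hp. destruct (Hs p Hp) as [H0 H1].
  destruct (classic (exists c, In c l /\ snd c p)) as [[c [Hc Hcp]]|Hn].
  - rewrite (H1 c Hc Hcp). apply sum_one; auto. apply nth_Disj; auto.
  - rewrite H0. apply sum_zero. intros c Hc Hcp; apply Hn; eauto.
    intros c Hc Hcp; apply Hn; eauto.
Qed.

Lemma B_approx f : in_B f -> approxV f.
Proof.
  intros [_ H] eps He. destruct (H eps He) as [s [Hs Hfs]].
  destruct (simple_V s Hs) as [g [h [Hg [Hh E]]]].
  exists g, h. refine (conj Hg (conj Hh _)). intros p Hp. rewrite <- E; auto.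
Qed.

Theorem mainTheorem9 (pref : (R -> R) -> (R -> R) -> Prop) :
  total_preorder_Qb pref ->
  continuous_pref pref ->
  monotonic_pref pref ->
  dual_independence pref ->
  exists L : (R -> R) -> R,
    cont_linear_functional L /\ represents_on_Qb L pref.
Proof.
  intros HT HC HM HD.
  destruct (classic (exists c d, strict pref (kc c) (kc d))) as [[c [d Hcd]] | Hn].
  - assert (G : Good pref).
    { refine (conj HT (conj HC (conj HM (conj HD _)))). apply (const_strict pref c d); auto. }
    exists (Lfun pref). split.
    + split.
      * intros f g a b Hf Hg. apply L_lin; auto using B_approx.
      * exists 1. intros f M Hf HMf. apply L_bound; auto using B_approx.
    + intros f g Hf Hg. rewrite !L_Qb; auto. apply rep_CE; auto.
  - exists (fun _ => 0). split.
    + split.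
      * intros; ring.
      * exists 0. intros f M _ _. rewrite Rabs_R0. lra.
    + intros f g Hf Hg. split; [|lra]. intros Hs. exfalso.
      pose proof Hf as [[M1 HM1] _]. pose proof Hg as [[M2 HM2] _].
      apply Hn. exists M1, (-M2).
      apply strict_trans_r with f; auto using Qb_const.
      * apply mono_le; auto using Qb_const. intros p Hp. unfold kc.
        specialize (HM1 p Hp). apply abs_bounds in HM1. lra.
      * apply strict_trans_l with g; auto using Qb_const.
        apply mono_le; auto using Qb_const. intros p Hp. unfold kc.
        specialize (HM2 p Hp). apply abs_bounds in HM2. lra.
Qed.
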